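(* Let $\mathcal{H}$ be a Hilbert space, $0<\mu<1$, and let $A\ge0$ and $B$ be bounded operators on $\mathcal{H}$ satisfying $[B,B^*]=(1-\mu)A$ and $A+B^*B=1$. Then $\ker(B)=\{0\}$ if and only if $A=0$.
   Context: $[B,B^*]=BB^*-B^*B$; $A\ge 0$ means $A$ is a positive operator. *)

(* Defs.v *)
From HB Require Import structures.
From mathcomp Require Import all_boot all_order all_algebra.
From mathcomp Require Import reals.
From mathcomp.real_closed Require Import complex.
Set Implicit Arguments. Unset Strict Implicit. Unset Printing Implicit Defensive.
Import Order.TTheory GRing.Theory Num.Theory.
Local Open Scope ring_scope.

Section Hilbert.
Variables (R : realType) (V : lmodType R[i]).

Definition is_inner_product (ip : V -> V -> R[i]) : Prop :=
  [/\ (forall (a : R[i]) (x y z : V), ip (a *: x + y) z = a * ip x z + ip y z),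
      (forall x y : V, ip y x = (ip x y)^*)%C,
      (forall x : V, 0 <= ip x x) &
      (forall x : V, ip x x = 0 -> x = 0)].

Definition hnorm (ip : V -> V -> R[i]) (x : V) : R := Num.sqrt (@complex.Re R (ip x x)).

Definition hcomplete (ip : V -> V -> R[i]) : Prop :=
  forall u : nat -> V,
    (forall eps : R, 0 < eps -> exists N : nat, forall m n : nat,
        (N <= m)%N -> (N <= n)%N -> hnorm ip (u m - u n) < eps) ->
    exists l : V, forall eps : R, 0 < eps -> exists N : nat, forall n : nat,
        (N <= n)%N -> hnorm ip (u n - l) < eps.

Definition is_hilbert (ip : V -> V -> R[i]) : Prop :=
  is_inner_product ip /\ hcomplete ip.

Definition bounded_op (ip : V -> V -> R[i]) (T : V -> V) : Prop :=
  (forall (a : R[i]) (x y : V), T (a *: x + y) = a *: T x + T y) /\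
  (exists M : R, forall x : V, hnorm ip (T x) <= M * hnorm ip x).

Definition is_adjoint (ip : V -> V -> R[i]) (T Ts : V -> V) : Prop :=
  forall x y : V, ip (T x) y = ip x (Ts y).

Definition positive_op (ip : V -> V -> R[i]) (A : V -> V) : Prop :=
  forall x : V, 0 <= ip (A x) x.

End Hilbert.

(* Main.v *)
Require Import Defs.
From HB Require Import structures.
From mathcomp Require Import all_boot all_order all_algebra.
From mathcomp Require Import reals.
From mathcomp.real_closed Require Import complex.
From mathcomp Require Import classical_sets.
From mathcomp Require Import ring lra.
Import Order.TTheory GRing.Theory Num.Theory.
Local Open Scope ring_scope.
Section Aux.
Variable R : realType.
Local Open Scope complex_scope.

Lemma ReM (r : R) (w : R[i]) : complex.Re (r%:C * w) = r * complex.Re w.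
Proof. case: w => a b /=. by rewrite mul0r subr0. Qed.
Lemma ReJ (w : R[i]) : complex.Re (w^*) = complex.Re w.
Proof. by case: w. Qed.
Lemma ReD (w z : R[i]) : complex.Re (w + z) = complex.Re w + complex.Re z.
Proof. by case: w; case: z. Qed.
Lemma ReN (w : R[i]) : complex.Re (- w) = - complex.Re w.
Proof. by case: w. Qed.
Lemma ge0C (w : R[i]) : 0 <= w -> w = (complex.Re w)%:C.
Proof. rewrite lecE /=; case: w => a b /= /andP[/eqP -> _]. by []. Qed.
Lemma ge0Re (w : R[i]) : 0 <= w -> 0 <= complex.Re w.
Proof. by rewrite lecE => /andP[]. Qed.

Lemma small_le (X a b : R) : (forall d, 0 < d -> X <= a + d * b) -> X <= a.
Proof.
move=> H; case: (lerP X a) => // hXa; exfalso.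
have hb1 : 0 < `|b| + 1 by rewrite ltr_wpDl.
pose d := (X - a) / (`|b| + 1).
have hd : 0 < d by rewrite divr_gt0 // subr_gt0.
have := H d hd.
have e1 : d * (`|b| + 1) = X - a by rewrite /d mulfVK // gt_eqF.
have e2 : d * b <= d * `|b| by rewrite ler_pM2l // ler_norm.
nra.
Qed.

End Aux.


Section Main.
Variables (R : realType) (V : lmodType R[i]) (ip : V -> V -> R[i]).
Hypothesis hip : is_inner_product ip.
Variables (mu : R) (A B Bs : V -> V).
Hypothesis hmu0 : 0 < mu.
Hypothesis hmu1 : mu < 1.
Definition linop (T : V -> V) := forall (a : R[i]) (x y : V), T (a *: x + y) = a *: T x + T y.
Hypotheses (hAl : linop A) (hBl : linop B) (hBsl : linop Bs).
Hypothesis hadj : is_adjoint ip B Bs.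
Hypothesis hApos : positive_op ip A.
Hypothesis hcomm : forall x : V, B (Bs x) - Bs (B x) = ((1 - mu)%:C)%C *: A x.
Hypothesis hsum : forall x : V, A x + Bs (B x) = x.

Lemma ipZD a x y z : ip (a *: x + y) z = a * ip x z + ip y z.
Proof. by case: hip. Qed.
Lemma ip0 z : ip 0 z = 0.
Proof. have := ipZD 1 0 0 z; rewrite scaler0 addr0 mul1r => /(congr1 (fun t => t - ip 0 z)). by rewrite subrr addrK. Qed.
Lemma ipD x y z : ip (x + y) z = ip x z + ip y z.
Proof. have -> : x + y = (1 : R[i]) *: x + y by rewrite scale1r. by rewrite ipZD mul1r. Qed.
Lemma ipZ a x z : ip (a *: x) z = a * ip x z.
Proof. by rewrite -[a *: x]addr0 ipZD ip0 addr0. Qed.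
Lemma ipN x z : ip (- x) z = - ip x z.
Proof. by rewrite -scaleN1r ipZ mulN1r. Qed.

Definition g x y := complex.Re (ip x y).
Definition N x := g x x.
Definition Q x := g (A x) x.

Lemma gC x y : g x y = g y x.
Proof. rewrite /g; case: hip => _ h _ _; by rewrite h ReJ. Qed.
Lemma gD x y z : g (x + y) z = g x z + g y z.
Proof. by rewrite /g ipD ReD. Qed.
Lemma gN x z : g (- x) z = - g x z.
Proof. by rewrite /g ipN ReN. Qed.
Lemma gB x y z : g (x - y) z = g x z - g y z.
Proof. by rewrite gD gN. Qed.
Lemma gZ (r : R) x z : g ((r%:C)%C *: x) z = r * g x z.
Proof. by rewrite /g ipZ ReM. Qed.
Lemma gDr x y z : g z (x + y) = g z x + g z y.
Proof. by rewrite gC gD !(gC z). Qed.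
Lemma gBr x y z : g z (x - y) = g z x - g z y.
Proof. by rewrite gC gB !(gC z). Qed.
Lemma gNr x z : g z (- x) = - g z x.
Proof. by rewrite gC gN gC. Qed.
Lemma gZr (r : R) x z : g z ((r%:C)%C *: x) = r * g z x.
Proof. by rewrite gC gZ gC. Qed.
Lemma N_ge0 x : 0 <= N x.
Proof. rewrite /N /g; case: hip => _ _ h _; exact: ge0Re. Qed.
Lemma N_eq0 x : N x = 0 -> x = 0.
Proof.
rewrite /N /g => h; case: hip => _ _ h1 h2; apply: h2.
by rewrite (@ge0C R _ (h1 x)) h.
Qed.

Section Lin.
Variable T : V -> V.
Hypothesis hT : linop T.
Lemma T0 : T 0 = 0.
Proof. have := hT 1 0 0; rewrite scaler0 addr0 scale1r => /(congr1 (fun t => t - T 0)). by rewrite subrr addrK. Qed.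
Lemma TD x y : T (x + y) = T x + T y.
Proof. have -> : x + y = (1 : R[i]) *: x + y by rewrite scale1r. by rewrite hT scale1r. Qed.
Lemma TZ a x : T (a *: x) = a *: T x.
Proof. by rewrite -[a *: x]addr0 hT T0 addr0. Qed.
Lemma TN x : T (- x) = - T x.
Proof. by rewrite -scaleN1r TZ scaleN1r. Qed.
Lemma TB x y : T (x - y) = T x - T y.
Proof. by rewrite TD TN. Qed.
End Lin.
Arguments T0 [T]. Arguments TD [T]. Arguments TZ [T]. Arguments TN [T]. Arguments TB [T].

Local Notation m := ((mu%:C)%C : R[i]).

Lemma Aeq x : A x = x - Bs (B x).
Proof. apply: (canRL (addrK (Bs (B x)))); exact: hsum. Qed.
Lemma E2 x : B (Bs x) = x - m *: A x.
Proof.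
have h := hcomm x; move/eqP: h; rewrite subr_eq => /eqP ->.
rewrite Aeq rmorphB /= scalerBl scale1r; set u := Bs (B x); set w := x - u.
by rewrite addrAC subrK.
Qed.

Lemma E3 x : B (A x) = m *: A (B x).
Proof.
rewrite Aeq (TB hBl) E2 (Aeq (B x)).
by rewrite opprB addrC subrK.
Qed.

Lemma E4 x : A (Bs x) = m *: Bs (A x).
Proof.
rewrite Aeq E2 (TB hBsl) (TZ hBsl) opprB addrC subrK. by [].
Qed.

Lemma gadj x y : g (B x) y = g x (Bs y).
Proof. by rewrite /g hadj. Qed.
Lemma gadj' x y : g (Bs x) y = g x (B y).
Proof. by rewrite gC -gadj gC. Qed.
Lemma gA x y : g (A x) y = g x (A y).
Proof. by rewrite !Aeq gB gBr gadj' gadj. Qed.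
Lemma Q_ge0 x : 0 <= Q x.
Proof. exact: ge0Re (hApos x). Qed.
Lemma NQ x : N x - Q x = N (B x).
Proof. by rewrite /Q /N Aeq gB opprB addrC subrK gadj'. Qed.
Lemma Q_le_N x : Q x <= N x.
Proof. by rewrite -subr_ge0 NQ N_ge0. Qed.
Lemma NA_le_Q x : N (A x) <= Q x.
Proof.
have e : Q x - N (A x) = mu * Q (B x).
  rewrite /N /Q -gBr {2}(Aeq x) opprB addrC subrK gC gadj' E3 gZr gC. by [].
rewrite -subr_ge0 e mulr_ge0 ?Q_ge0 // ltW //.
Qed.

Lemma N_neg x : N (- x) = N x.
Proof. by rewrite /N gN gC gN opprK. Qed.
Lemma N_add_le x y : N (x + y) <= 2 * N x + 2 * N y.
Proof.
have := N_ge0 (x - y); rewrite /N !(gD, gN, gDr, gNr) (gC y x). lra.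
Qed.
Lemma NA_le_N x : N (A x) <= N x.
Proof. exact: le_trans (NA_le_Q x) (Q_le_N x). Qed.

Definition Ap n x := iter n A x.
Lemma ApS n x : Ap n.+1 x = A (Ap n x). Proof. by []. Qed.
Lemma gAp k m x y : g (Ap k x) (Ap m y) = g (Ap (k + m) x) y.
Proof.
elim: m k => [|m IH] k; first by rewrite addn0.
by rewrite ApS -gA -ApS IH addSnnS.
Qed.

Section Step1.
Variable z : V.
Definition b k := g (Ap k z) z.
Lemma b_even m : b (m + m) = N (Ap m z).
Proof. by rewrite /N gAp. Qed.
Lemma b_odd m : b (m + m).+1 = Q (Ap m z).
Proof. by rewrite /Q -ApS gAp addSn. Qed.
Lemma parity k : exists m, k = (m + m)%N \/ k = (m + m).+1.
Proof.
exists k./2; have := odd_double_half k; rewrite -addnn.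
by case: (odd k) => e; [right|left]; rewrite -{1}e.
Qed.
Lemma b_ge0 k : 0 <= b k.
Proof. have [m [->|->]] := parity k; by rewrite ?b_even ?b_odd ?N_ge0 ?Q_ge0. Qed.
Lemma b_dec k : b k.+1 <= b k.
Proof.
have [m [->|->]] := parity k.
  by rewrite b_odd b_even Q_le_N.
have -> : (m + m).+2 = (m.+1 + m.+1)%N by rewrite addSn addnS.
by rewrite b_even b_odd ApS NA_le_Q.
Qed.
Lemma b_mono j k : (j <= k)%N -> b k <= b j.
Proof.
elim: k => [|k IH]; first by rewrite leqn0 => /eqP ->.
rewrite leq_eqVlt => /orP[/eqP -> //|]; rewrite ltnS => /IH.
exact: le_trans (b_dec k).
Qed.
End Step1.

Lemma sqrt_lt (x e : R) : 0 < e -> x < e ^+ 2 -> Num.sqrt x < e.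
Proof.
move=> he hx; have he2 : 0 < e ^+ 2 by rewrite exprn_gt0.
by rewrite -(ltr_sqrt x he2) sqrtr_sqr gtr0_norm in hx.
Qed.
Lemma sqrt_lt' (x d : R) : 0 < d -> Num.sqrt x < Num.sqrt d -> x < d.
Proof. by move=> hd; rewrite ltr_sqrt. Qed.

Lemma Ap_small (hcomp : hcomplete ip) (hinj : forall x, B x = 0 -> x = 0) z d :
  0 < d -> exists n, N (Ap n z) < d.
Proof.
move=> hd.
pose E : set R := fun y => exists k, b z k = y.
have hE : has_inf E.
  split; first by exists (b z 0); exists 0%N.
  by exists 0%R => y [k <-]; exact: b_ge0.
set L := inf E.
have hL k : L <= b z k by apply: ge_inf; [case: hE | exists k].
have hadh e : 0 < e -> exists k, b z k < L + e.
  by move=> he; have [y [k <-] hy] := inf_adherent he hE; exists k.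
have hN m n : N (Ap m z - Ap n z) = b z (m + m) - 2 * b z (m + n) + b z (n + n).
  rewrite /N !(gD, gN, gDr, gNr) /b !gAp (addnC n m); lra.
have [v hv] : exists v : V, forall eps : R, 0 < eps -> exists K : nat, forall n : nat,
        (K <= n)%N -> hnorm ip (Ap n z - v) < eps.
  apply: hcomp => eps heps.
  have he : 0 < eps ^+ 2 / 2 by rewrite divr_gt0 // exprn_gt0.
  have [K hK] := hadh _ he; exists K => m n hm hn.
  apply: sqrt_lt => //; change (N (Ap m z - Ap n z) < eps ^+ 2); rewrite hN.
  have h1 := b_mono z _ _ (leq_trans hm (leq_addr m m)).
  have h2 := b_mono z _ _ (leq_trans hn (leq_addr n n)).
  have h3 := hL (m + n)%N.
  lra.
have hv' dd : 0 < dd -> exists K, forall n, (K <= n)%N -> N (Ap n z - v) < dd.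
  move=> hdd; have hs : 0 < Num.sqrt dd by rewrite sqrtr_gt0.
  have [K hK] := hv _ hs; exists K => n hn.
  exact: sqrt_lt' hdd (hK n hn).
have hAv : A v = v.
  have h0 : N (A v - v) <= 0.
    apply: (@small_le _ _ _ 4) => dd hdd.
    have [K hK] := hv' dd hdd.
    have e : A v - v = A (v - Ap K z) + (Ap K.+1 z - v).
      by rewrite (TB hAl) -ApS addrA subrK.
    rewrite e; have := N_add_le (A (v - Ap K z)) (Ap K.+1 z - v).
    have := NA_le_N (v - Ap K z); have := N_neg (Ap K z - v); rewrite opprB.
    have := hK K (leqnn K); have := hK K.+1 (leqnSn K).
    lra.
  have : N (A v - v) = 0 by apply/eqP; rewrite eq_le h0 N_ge0.
  by move/N_eq0/eqP; rewrite subr_eq0 => /eqP.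
have hv0 : v = 0.
  apply: hinj; apply: N_eq0; rewrite -NQ /Q hAv; exact: subrr.
have [K hK] := hv' d hd; exists K; have := hK K (leqnn K); by rewrite hv0 subr0.
Qed.

Lemma decomp n y : exists w, y = Ap n y + Bs w.
Proof.
elim: n => [|n [w IH]]; first by exists 0; rewrite (T0 hBsl) addr0.
exists (B (Ap n y) + w); rewrite ApS (TD hBsl) addrA hsum; exact: IH.
Qed.

Lemma cs u r t : 0 < t -> 2 * t * g u r <= t ^+ 2 * N u + N r /\ - (2 * t * g u r) <= t ^+ 2 * N u + N r.
Proof.
move=> ht; split.
  have := N_ge0 ((t%:C)%C *: u - r).
  rewrite /N !(gD, gN, gDr, gNr, gZ, gZr) (gC r u); lra.
have := N_ge0 ((t%:C)%C *: u + r).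
rewrite /N !(gD, gN, gDr, gNr, gZ, gZr) (gC r u); lra.
Qed.

Lemma ranBs c z : 0 <= c -> c <= 1 -> (forall y, Q y <= c * N y) ->
  Q (Bs z) <= mu * c * N (Bs z).
Proof.
move=> hc0 hc1 hQ.
have e1 : Q (Bs z) = mu * (Q z - mu * N (A z)).
  by rewrite /Q E4 gZ gadj' E2 gBr gZr.
have e2 : N (Bs z) = N z - mu * Q z.
  by rewrite /N gadj' E2 gBr gZr (gC z (A z)).
have e3 : N ((c%:C)%C *: z - A z) = c ^+ 2 * N z - 2 * c * Q z + N (A z).
  rewrite /N /Q !(gD, gN, gDr, gNr, gZ, gZr) (gC z (A z)); lra.
have h1 : 0 <= (1 - mu * c) * (c * N z - Q z).
  have hh : 0 <= (1 - mu) * c by rewrite mulr_ge0 // subr_ge0 ltW.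
  apply: mulr_ge0; rewrite subr_ge0; [lra | exact: hQ].
have h2 : 0 <= mu * N ((c%:C)%C *: z - A z) by rewrite mulr_ge0 ?N_ge0 // ltW.
rewrite e1 e2; rewrite e3 in h2.
have h3 : 0 <= mu * ((1 - mu * c) * (c * N z - Q z)) by rewrite mulr_ge0 // ltW.
have h4 : 0 <= mu * (mu * (c ^+ 2 * N z - 2 * c * Q z + N (A z))) by rewrite mulr_ge0 // ltW.
lra.
Qed.

Lemma step (hcomp : hcomplete ip) (hinj : forall x, B x = 0 -> x = 0) c :
  0 <= c -> c <= 1 -> (forall y, Q y <= c * N y) -> forall y, Q y <= mu * c * N y.
Proof.
move=> hc0 hc1 hQ y; set P := mu * c.
have hP : 0 <= P by rewrite mulr_ge0 // ltW.
suff : Q y - P * N y <= 0 by lra.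
apply: (@small_le _ _ _ (P * N y + N (A y))) => t ht; rewrite add0r.
apply: (@small_le _ _ _ ((P + t * P + 1) / t)) => d hd.
have [n hn] := Ap_small hcomp hinj y d hd.
have [w hw] := decomp n y.
set r := Ap n y in hn hw.
have hyr : y - r = Bs w by apply/eqP; rewrite subr_eq addrC -hw.
have h := ranBs c w hc0 hc1 hQ; rewrite -hyr -/P in h.
have e1 : Q (y - r) = Q y - 2 * g (A y) r + Q r.
  rewrite /Q (TB hAl) gB !gBr (gA r y) (gC r (A y)); lra.
have e2 : N (y - r) = N y - 2 * g y r + N r.
  rewrite /N gB !gBr (gC r y); lra.
rewrite e1 e2 in h.
have [c1 _] := cs (A y) r t ht.
have [_ c2] := cs y r t ht.
have c3 := ler_wpM2l hP c2.
have h' : t * (Q y - 2 * g (A y) r + Q r) <= t * (P * (N y - 2 * g y r + N r)).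
  by rewrite ler_pM2l.
have hQr : 0 <= t * Q r by rewrite mulr_ge0 ?Q_ge0 // ltW.
have hS : 0 <= P + t * P + 1 by rewrite !addr_ge0 // mulr_ge0 // ltW.
have hdr : 0 <= (d - N r) * (P + t * P + 1) by rewrite mulr_ge0 // subr_ge0 ltW.
have ee : t * (d * ((P + t * P + 1) / t)) = d * (P + t * P + 1).
  by field; rewrite gt_eqF.
have key : t * (Q y - P * N y) <= t * (t * (P * N y + N (A y))) + d * (P + t * P + 1).
  lra.
by rewrite -ee -mulrDr ler_pM2l in key.
Qed.

Lemma all_pow (hcomp : hcomplete ip) (hinj : forall x, B x = 0 -> x = 0) k :
  forall y, Q y <= mu ^+ k * N y.
Proof.
elim: k => [|k IH] y; first by rewrite expr0 mul1r Q_le_N.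
rewrite exprS; apply: step => //.
  exact: exprn_ge0 (ltW hmu0).
exact: exprn_ile1 (ltW hmu0) (ltW hmu1).
Qed.

Lemma bern (q : R) k : 1 <= q -> 1 + k%:R * (q - 1) <= q ^+ k.
Proof.
move=> hq; elim: k => [|k IH]; first by rewrite expr0 mul0r addr0.
rewrite exprS -addn1 natrD.
have h1 := ler_wpM2l (le_trans ler01 hq) IH.
have h2 : 0 <= (q - 1) * (k%:R * (q - 1)) by rewrite mulr_ge0 ?mulr_ge0 ?ler0n // subr_ge0.
lra.
Qed.

Lemma Q_le0 (hcomp : hcomplete ip) (hinj : forall x, B x = 0 -> x = 0) y : Q y <= 0.
Proof.
case: (lerP (Q y) 0) => // hq; exfalso.
set q := mu^-1.
have hq1 : 1 < q by rewrite invf_gt1.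
have hN0 : 0 <= N y / ((q - 1) * Q y).
  apply: divr_ge0; first exact: N_ge0.
  by apply: mulr_ge0; apply: ltW; rewrite ?subr_gt0.
have hk := archi_boundP hN0; set k := Num.Def.archi_bound _ in hk.
rewrite ltr_pdivrMr ?mulr_gt0 // ?subr_gt0 // in hk.
have h1 := all_pow hcomp hinj k y.
have h2 : q ^+ k * Q y <= q ^+ k * (mu ^+ k * N y).
  by rewrite ler_wpM2l // exprn_ge0 // ltW // (lt_trans ltr01 hq1).
rewrite mulrA -exprMn mulVf ?expr1n ?mul1r in h2; last by rewrite gt_eqF.
have h3 := ler_wpM2r (ltW hq) (bern q k (ltW hq1)).
lra.
Qed.

Lemma main_sec (hcomp : hcomplete ip) :
  (forall x : V, B x = 0 -> x = 0) <-> (forall x : V, A x = 0).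
Proof.
split.
  move=> hinj x; apply: N_eq0; apply/eqP; rewrite eq_le N_ge0 andbT.
  exact: le_trans (NA_le_Q x) (Q_le0 hcomp hinj x).
move=> hA0 x hBx; by rewrite -(hsum x) hA0 hBx (T0 hBsl) addr0.
Qed.

End Main.

Theorem lemma1p5 (R : realType) (V : lmodType R[i]) (ip : V -> V -> R[i])
  (hH : is_hilbert ip) (mu : R) (hmu0 : 0 < mu) (hmu1 : mu < 1)
  (A B Bs : V -> V)
  (hA : bounded_op ip A) (hB : bounded_op ip B) (hBs : bounded_op ip Bs)
  (hadj : is_adjoint ip B Bs) (hApos : positive_op ip A)
  (hcomm : forall x : V, B (Bs x) - Bs (B x) = ((1 - mu)%:C)%C *: A x)
  (hsum : forall x : V, A x + Bs (B x) = x) :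
  (forall x : V, B x = 0 -> x = 0) <-> (forall x : V, A x = 0).
Proof.
case: hH => hip hcomp.
have hAl : @linop R V A by case: hA.
have hBl : @linop R V B by case: hB.
have hBsl : @linop R V Bs by case: hBs.

exact: (@main_sec R V ip hip mu A B Bs hmu0 hmu1 hAl hBl hBsl hadj hApos hcomm hsum hcomp).
Qed.
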